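(* Let $T$ be a tournament and $x\in\mathrm{SA}_1(T)$. If $x_v<3/7$ for all $v\in V(T)$, then $T$ is light.
   Context: A triangle of a tournament $T$ is a set $\{a,b,c\}\subseteq V(T)$ inducing a directed 3-cycle. An unordered pair $ab$ of vertices is a diagonal if there exist vertices $u,v$ with $\{u,v,a\}$ and $\{u,v,b\}$ both triangles. A triangle is heavy if at least two of its three pairs of vertices are diagonals. A tournament is heavy if it has a heavy triangle, and light otherwise. $E(T)$ is the set of unordered pairs of distinct vertices. $\mathrm{SA}_1(T)$ is the set of $x\in\mathbb{R}^{V(T)}$ for which there exists $(x_{ab})_{ab\in E(T)}$ such that: for every triangle $\{a,b,c\}$ (any labelling) and every $d\in V(T)\setminus\{a,b,c\}$, (1) $x_a+x_b+x_c\ge 1+x_{ab}+x_{bc}$, (2) $x_{ad}+x_{bd}+x_{cd}\ge x_d$, (3) $x_a+x_b+x_c+x_d\ge 1+x_{ad}+x_{bd}+x_{cd}$; and for all distinct $a,b$, (4) $1\ge x_a\ge x_{ab}\ge 0$. *)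

(* Defs.v *)
From mathcomp Require Import all_boot all_order all_algebra.
Set Implicit Arguments. Unset Strict Implicit. Unset Printing Implicit Defensive.
Import Order.TTheory GRing.Theory Num.Theory.
Local Open Scope ring_scope.

Section Tournament.
Variable V : finType.
Variable E : rel V.

Definition is_tournament : Prop :=
  (forall u, ~~ E u u) /\
  (forall u v, u != v -> (E u v || E v u)) /\
  (forall u v, E u v -> ~~ E v u).

Definition is_triangle (a b c : V) : bool :=
  [&& a != b, b != c, a != c &
   (E a b && E b c && E c a) || (E a c && E c b && E b a)].

Definition is_diagonal (a b : V) : Prop :=
  a != b /\ exists u v, is_triangle u v a /\ is_triangle u v b.

Definition is_heavy_triangle (a b c : V) : Prop :=
  is_triangle a b c /\
  ((is_diagonal a b /\ is_diagonal b c) \/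
   (is_diagonal b c /\ is_diagonal a c) \/
   (is_diagonal a b /\ is_diagonal a c)).

Definition heavy : Prop := exists a b c, is_heavy_triangle a b c.
Definition light : Prop := ~ heavy.

(* SA_1(T): pair variables x_{ab} are given by a symmetric function y
   (only its values on distinct pairs matter). *)
Definition in_SA1 (R : realFieldType) (x : V -> R) : Prop :=
  exists y : V -> V -> R,
    (forall a b, y a b = y b a) /\
    (forall a b c d, is_triangle a b c -> d != a -> d != b -> d != c ->
       [/\ x a + x b + x c >= 1 + y a b + y b c,
           y a d + y b d + y c d >= x d &
           x a + x b + x c + x d >= 1 + y a d + y b d + y c d]) /\
    (forall a b, a != b -> (1 >= x a) /\ (x a >= y a b) /\ (y a b >= 0)).
End Tournament.

(* Main.v *)
Require Import Defs.
From mathcomp Require Import all_boot all_order all_algebra.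
From mathcomp Require Import lra.
Import Order.TTheory GRing.Theory Num.Theory.
Local Open Scope ring_scope.

Lemma tri_rot (V : finType) (E : rel V) a b c :
  is_triangle E a b c -> is_triangle E b c a.
Proof.
rewrite /is_triangle (eq_sym c a) (eq_sym b a).
by case: (a == b); case: (b == c); case: (a == c);
  case: (E a b); case: (E b c); case: (E c a); case: (E a c); case: (E c b); case: (E b a).
Qed.

Lemma tri_swap (V : finType) (E : rel V) a b c :
  is_triangle E a b c -> is_triangle E b a c.
Proof.
rewrite /is_triangle (eq_sym b a).
by case: (a == b); case: (b == c); case: (a == c);
  case: (E a b); case: (E b c); case: (E c a); case: (E a c); case: (E c b); case: (E b a).
Qed.

Lemma tri_neq (V : finType) (E : rel V) a b c :
  is_triangle E a b c -> [/\ a != b, b != c & a != c].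
Proof. by case/and4P. Qed.

Arguments tri_neq {V E a b c}.
Arguments tri_rot {V E a b c}.
Arguments tri_swap {V E a b c}.

Theorem lemma1 (R : realFieldType) (V : finType) (E : rel V)
  (HT : is_tournament E) (x : V -> R) (Hx : in_SA1 E x)
  (Hsmall : forall v, x v < 3 / 7) :
  light E.
Proof.
case: Hx => y [ys [Htri Hb]].
have diag : forall a b c, is_diagonal E a b -> 1 / 7 < y a b /\ exists d, [&& d != a, d != b & d != c].
  move=> a b c [nab [u [v [t1 t2]]]].
  have [nuv nva nua] := tri_neq t1.
  have [_ nvb nub] := tri_neq t2.
  have t3 : is_triangle E u b v by apply: tri_rot; apply: tri_swap.
  have := Htri u v a b t1; rewrite (eq_sym b u) nub (eq_sym b v) nvb (eq_sym b a) nab => /(_ isT isT isT).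
  case=> _ k2 _.
  have := Htri u b v a t3; rewrite (eq_sym a u) nua nab (eq_sym a v) nva => /(_ isT isT isT).
  case=> k1 _ _.
  rewrite (ys b v) in k1.
  split; first by have := Hsmall u; have := Hsmall v; lra.
  case: (eqVneq u c) => [euc|nuc]; last by exists u; rewrite nuc nua nub.
  by exists v; rewrite -euc (eq_sym v u) nuv nva nvb.
move=> [a [b [c [t H]]]].
have ha := Hsmall a; have hb := Hsmall b; have hc := Hsmall c.
have [nab nbc nac] := tri_neq t.
case: H => [[d1 d2]|[[d1 d2]|[d1 d2]]].
- have [k1 [d /and3P [dna dnb dnc]]] := diag a b c d1.
  have [k2 _] := diag b c a d2.
  have [h _ _] := Htri a b c d t dna dnb dnc.
  lra.
- have [k1 [d /and3P [dna dnb dnc]]] := diag b c a d1.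
  have [k2 _] := diag a c b d2.
  have [h _ _] := Htri b c a d (tri_rot t) dna dnb dnc.
  rewrite (ys c a) in h.
  lra.
- have [k1 [d /and3P [dna dnb dnc]]] := diag a b c d1.
  have [k2 _] := diag a c b d2.
  have [h _ _] := Htri b a c d (tri_swap t) dnb dna dnc.
  rewrite (ys b a) in h.
  lra.
Qed.
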